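(* Let $\tau>0$, $u_n\in\mathcal V_{[0,1]}$ with $M:=\mathcal M(u_n)>0$, let $X:=\{u\in\mathcal V_{[0,1]}:\mathcal M(u)=M\}$ and $S_{\tau,u_n}:=\operatorname{argmax}_{u\in X}\langle u,e^{-\tau\Delta}u_n\rangle_{\mathcal V}$. Let $\alpha_1<\dots<\alpha_K$ be the distinct values of $e^{-\tau\Delta}u_n$ and $a_{\alpha}:=\sum_{i:(e^{-\tau\Delta}u_n)_i=\alpha}d_i^r$. Then there is a unique $k\in\{1,\dots,K\}$ with \[\sum_{l=k+1}^K a_{\alpha_l} < M \leq \sum_{l=k}^K a_{\alpha_l},\] and $u\in S_{\tau,u_n}$ if and only if $u\in X$ and: $u_i=0$ whenever $(e^{-\tau\Delta}u_n)_i<\alpha_k$; $u_i=1$ whenever $(e^{-\tau\Delta}u_n)_i>\alpha_k$; and $M-\sum_{l=k+1}^K a_{\alpha_l}=\sum_{i:(e^{-\tau\Delta}u_n)_i=\alpha_k}d_i^ru_i$. Consequently $S_{\tau,u_n}$ has exactly one element if and only if $M=\sum_{l=k}^K a_{\alpha_l}$ or there is exactly one $i\in V$ with $(e^{-\tau\Delta}u_n)_i=\alpha_k$.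
   Context: $G=(V,E)$ is a finite, simple, connected, undirected graph with weights $\omega_{ij}=\omega_{ji}>0$ for $ij\in E$, $\omega_{ij}=0$ otherwise; $d_i=\sum_j\omega_{ij}$, $r\in[0,1]$ fixed. $\mathcal V$ = functions $V\to\mathbb R$ with $\langle u,v\rangle_{\mathcal V}=\sum_i u_iv_id_i^r$; $\mathcal V_{[0,1]}$ = functions $V\to[0,1]$. $(\Delta u)_i=d_i^{-r}\sum_j\omega_{ij}(u_i-u_j)$, $e^{-\tau\Delta}$ its matrix exponential. $\mathbf 1$ all-ones; $\mathcal M(u)=\langle u,\mathbf 1\rangle_{\mathcal V}$. *)

(* Defs.v *)
From HB Require Import structures.
From mathcomp Require Import all_boot all_order all_algebra.
From mathcomp Require Import all_classical all_reals all_analysis.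
Set Implicit Arguments. Unset Strict Implicit. Unset Printing Implicit Defensive.
Import Order.TTheory GRing.Theory Num.Theory.
Local Open Scope ring_scope.

Section Graph.
Variables (R : realType) (V : finType).

(* weighted finite simple connected undirected graph, given by its weights:
   omega i j > 0 iff ij is an edge, 0 otherwise. *)
Definition is_weighted_graph (omega : V -> V -> R) : Prop :=
  (forall i j, omega i j = omega j i) /\
  (forall i j, 0 <= omega i j) /\
  (forall i, omega i i = 0) /\
  (forall i j, connect (fun x y => 0 < omega x y) i j).

Definition deg (omega : V -> V -> R) (i : V) : R := \sum_j omega i j.

Definition degr (omega : V -> V -> R) (r : R) (i : V) : R := powR (deg omega i) r.

Definition ipV (omega : V -> V -> R) (r : R) (u v : V -> R) : R :=
  \sum_i u i * v i * degr omega r i.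

Definition mass (omega : V -> V -> R) (r : R) (u : V -> R) : R :=
  ipV omega r u (fun _ => 1).

Definition graphLap (omega : V -> V -> R) (r : R) (u : V -> R) : V -> R :=
  fun i => (degr omega r i)^-1 * \sum_j omega i j * (u i - u j).

(* e^{-tau Delta} u : the matrix exponential applied to u, as the sum of
   the (entrywise convergent) exponential series sum_k (-tau)^k/k! Delta^k u *)
Definition heat (omega : V -> V -> R) (r tau : R) (u : V -> R) : V -> R :=
  fun i => limn (fun N : nat =>
    \sum_(k < N) ((- tau) ^+ k / (k`!)%:R) * iter k (graphLap omega r) u i).

Definition in01 (u : V -> R) : Prop := forall i, 0 <= u i <= 1.

Definition inX (omega : V -> V -> R) (r M : R) (u : V -> R) : Prop :=
  in01 u /\ mass omega r u = M.

Definition inS (omega : V -> V -> R) (r tau : R) (un u : V -> R) : Prop :=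
  inX omega r (mass omega r un) u /\
  forall v, inX omega r (mass omega r un) v ->
    ipV omega r v (heat omega r tau un) <= ipV omega r u (heat omega r tau un).

Definition values (f : V -> R) : seq R :=
  sort <=%R (undup [seq f i | i <- enum V]).

Definition aval (omega : V -> V -> R) (r : R) (f : V -> R) (alpha : R) : R :=
  \sum_(i | f i == alpha) degr omega r i.

(* sum_{l = k}^{K} a_{alpha_l}, with 0-based index k into [values f] *)
Definition tailsum (omega : V -> V -> R) (r : R) (f : V -> R) (k : nat) : R :=
  \sum_(k <= l < size (values f)) aval omega r f (nth 0 (values f) l).

End Graph.

(* Main.v *)
Require Import Defs.
From HB Require Import structures.
From mathcomp Require Import all_boot all_order all_algebra.
From mathcomp Require Import all_classical all_reals all_analysis.
From mathcomp Require Import ring lra.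
Import Order.TTheory GRing.Theory Num.Theory.
Local Open Scope ring_scope.
Section Aux.
Variables (R : realType) (V : finType) (omega : V -> V -> R) (r : R) (f : V -> R).

Let vs := values f.
Let idx i := index (f i) vs.

Lemma vs_uniq : uniq vs.
Proof. by rewrite /vs /values sort_uniq undup_uniq. Qed.

Lemma vs_sorted : sorted <%R vs.
Proof. by rewrite /vs /values sort_lt_sorted undup_uniq. Qed.

Lemma mem_vs i : f i \in vs.
Proof. by rewrite /vs /values mem_sort mem_undup map_f // mem_enum. Qed.

Lemma idx_lt i : (idx i < size vs)%N.
Proof. by rewrite /idx index_mem mem_vs. Qed.

Lemma nth_idx i : nth 0 vs (idx i) = f i.
Proof. by rewrite /idx nth_index // mem_vs. Qed.

Lemma vs_attained l : (l < size vs)%N -> exists i, f i = nth 0 vs l.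
Proof.
move=> hl; have := mem_nth 0 hl; rewrite /vs /values mem_sort mem_undup.
by case/mapP => i _ ->; exists i.
Qed.

Lemma nth_lt a b : (a < size vs)%N -> (b < size vs)%N ->
  (nth 0 vs a < nth 0 vs b) = (a < b)%N.
Proof.
move=> ha hb; case: (ltnP a b) => hab.
  by apply: (sorted_ltn_nth lt_trans 0 vs_sorted).
rewrite leq_eqVlt in hab; case/orP: hab => [/eqP -> | hba]; first by rewrite ltxx.
apply/negbTE; rewrite -leNgt; apply/ltW.
by apply: (sorted_ltn_nth lt_trans 0 vs_sorted).
Qed.

Lemma eq_nth_idx i l : (l < size vs)%N -> (f i == nth 0 vs l) = (l == idx i).
Proof.
move=> hl; apply/eqP/eqP => [fi|->]; last by rewrite nth_idx.
by rewrite /idx fi index_uniq // vs_uniq.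
Qed.

Lemma lt_idx i k : (k < size vs)%N -> (nth 0 vs k < f i) = (k < idx i)%N.
Proof. by move=> hk; rewrite -{1}nth_idx nth_lt // idx_lt. Qed.

Lemma le_idx i k : (k < size vs)%N -> (nth 0 vs k <= f i) = (k <= idx i)%N.
Proof. by move=> hk; rewrite -{1}nth_idx leNgt nth_lt ?idx_lt // -leqNgt. Qed.

Lemma tail_idx j : tailsum omega r f j = \sum_(i | (j <= idx i)%N) degr omega r i.
Proof.
rewrite /tailsum /aval.
under eq_bigr => l _ do rewrite big_mkcond /=.
rewrite exchange_big /= [RHS]big_mkcond /=; apply: eq_bigr => i _.
rewrite (eq_big_nat _ _ (F2 := fun l => if l == idx i then degr omega r i else 0)); last first.
  by move=> l /andP[_ hl]; rewrite -/vs eq_nth_idx.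
rewrite -big_mkcond /=.
case: (boolP (j <= idx i)%N) => h.
  rewrite -big_filter; have -> : [seq l <- index_iota j (size vs) | l == idx i] = [:: idx i].
    rewrite filter_pred1_uniq ?iota_uniq // mem_index_iota h; exact: idx_lt.
  by rewrite big_seq1.
rewrite big1_seq // => l /andP[/eqP -> ]; rewrite mem_index_iota (negbTE h) //.
Qed.

End Aux.
Lemma degr_pos (R : realType) (V : finType) (omega : V -> V -> R) (r : R) (un : V -> R) :
  is_weighted_graph omega -> 0 < mass omega r un -> forall i, 0 < degr omega r i.
Proof.
move=> [_ [pos [_ conn]]] HM i.
have ge0 : 0 <= deg omega i by apply: sumr_ge0.
rewrite le_eqVlt in ge0; case/orP: ge0 => [/eqP d0 | dpos]; last by rewrite /degr powR_gt0.
have om0 : forall j, omega i j = 0.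
  move=> j; apply: (psumr_eq0P (P := predT) (F := omega i)) => // k _; exact: pos.
have single : forall j, j = i.
  move=> j; case/connectP: (conn i j) => [[|y p]] /=; first by move=> _ ->.
  by case/andP; rewrite om0 ltxx.
rewrite lt_neqAle powR_ge0 andbT; apply/eqP => h; move: HM.
rewrite /mass /ipV (bigD1 i) //= big1 ?addr0; first by rewrite -h mulr0 ltxx.
by move=> j /eqP []; rewrite (single j).
Qed.
Theorem theorem26 (R : realType) (V : finType) (omega : V -> V -> R) (r : R)
  (Hgraph : is_weighted_graph omega) (Hr : 0 <= r <= 1)
  (tau : R) (Htau : 0 < tau) (un : V -> R) (Hun : in01 un)
  (HM : 0 < mass omega r un) :
  let M := mass omega r un in
  let f := heat omega r tau un in
  let K := size (values f) in
  let cond k := tailsum omega r f k.+1 < M <= tailsum omega r f k in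
  exists k : nat,
    [/\ (k < K)%N, cond k,
        (forall k' : nat, (k' < K)%N -> cond k' -> k' = k),
        (forall u : V -> R, inS omega r tau un u <->
           [/\ inX omega r M u,
               (forall i, f i < nth 0 (values f) k -> u i = 0),
               (forall i, nth 0 (values f) k < f i -> u i = 1) &
               M - tailsum omega r f k.+1 =
                 \sum_(i | f i == nth 0 (values f) k) degr omega r i * u i])
      & ((exists! u : V -> R, inS omega r tau un u) <->
           (M = tailsum omega r f k \/
            exists! i : V, f i = nth 0 (values f) k))].
Proof.
move=> M f K cond.
have wpos := @degr_pos _ _ omega r un Hgraph HM.
set w := degr omega r.
set T := tailsum omega r f.
have TK : T K = 0.
  by rewrite /T tail_idx big_pred0 // => i; rewrite leqNgt idx_lt.
have T0 : M <= T 0.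
  rewrite /T tail_idx /M /mass /ipV; apply: ler_sum => i _.
  by rewrite mulr1 ler_piMl ?(ltW (wpos i)) //; case/andP: (Hun i).
have Tmono : forall a b, (a <= b)%N -> T b <= T a.
  move=> a b hab; rewrite /T !tail_idx [X in X <= _]big_mkcond [X in _ <= X]big_mkcond.
  apply: ler_sum => i _; case: ifP => hb; first by rewrite (leq_trans hab hb).
  by case: ifP => // _; exact: ltW.
pose P k := (k <= K)%N && (M <= T k).
have exP : exists k, P k by exists 0%N; rewrite /P T0.
have ubP : forall k, P k -> (k <= K)%N by move=> k /andP[].
case: (ex_maxnP exP ubP) => k /andP[kK MTk] kmax.
have kltK : (k < K)%N.
  rewrite ltn_neqAle kK andbT; apply/eqP => ek; move: MTk; rewrite ek TK.
  by rewrite leNgt HM.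
have condk : cond k.
  rewrite /cond MTk andbT ltNge; apply/negP => h.
  by have := kmax k.+1; rewrite /P kltK h => /(_ isT); rewrite ltnn.
exists k.
set alpha := nth 0 (values f) k.
have HG : T k.+1 = \sum_(i | alpha < f i) w i.
  by rewrite /T tail_idx; apply: eq_bigl => i; rewrite lt_idx.
set a := \sum_(i | f i == alpha) w i.
have HTk : T k = T k.+1 + a.
  rewrite HG /T tail_idx /a (bigID (fun i => alpha < f i)) /=; congr (_ + _).
    by apply: eq_bigl => i; rewrite -le_idx // andb_idl // => /ltW.
  apply: eq_bigl => i; rewrite -le_idx // le_eqVlt.
  by case: ltgtP => //= ->; rewrite eqxx.
have apos : 0 < a.
  have [i0 fi0] := @vs_attained _ _ f k kltK.
  rewrite /a (bigD1 i0) /=; last by rewrite fi0.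
  by rewrite ltr_wpDr ?wpos // sumr_ge0 // => i _; exact: ltW.
pose zero (u : V -> R) := forall i, f i < alpha -> u i = 0.
pose one (u : V -> R) := forall i, alpha < f i -> u i = 1.
have split_mass : forall u, zero u -> one u ->
    mass omega r u = T k.+1 + \sum_(i | f i == alpha) w i * u i.
  move=> u z o; rewrite HG [X in X + _]big_mkcond [X in _ + X]big_mkcond -big_split.
  rewrite /mass /ipV; apply: eq_bigr => i _ /=; rewrite mulr1.
  case: (ltgtP (f i) alpha) => h.
  - by rewrite z // mul0r add0r.
  - by rewrite o // mul1r addr0.
  - by rewrite ?h ?eqxx add0r mulrC.
have key : forall u v, mass omega r v = mass omega r u ->
    ipV omega r v f - ipV omega r u f = \sum_i w i * (v i - u i) * (f i - alpha).
  move=> u v hm.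
  have -> : \sum_i w i * (v i - u i) * (f i - alpha) =
     \sum_i w i * (v i - u i) * (f i - alpha) + alpha * (mass omega r v - mass omega r u).
    by rewrite hm subrr mulr0 addr0.
  rewrite /mass /ipV -!sumrB mulr_sumr -big_split; apply: eq_bigr => i _ /=.
  rewrite /w; ring.
have term_le0 : forall u v, in01 v -> zero u -> one u ->
    forall i, w i * (v i - u i) * (f i - alpha) <= 0.
  move=> u v v01 z o i; case/andP: (v01 i) => v0 v1.
  case: (ltgtP (f i) alpha) => h.
  - rewrite z // subr0 -mulrA pmulr_rle0 // mulrC; apply: mulr_le0_ge0 => //; by rewrite subr_le0 ltW.
  - rewrite o // -mulrA pmulr_rle0 // mulrC pmulr_rle0 ?subr_gt0 //; by rewrite subr_le0.
  - by rewrite h subrr mulr0.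
have condS : forall u, in01 u -> mass omega r u = M -> zero u -> one u ->
    inS omega r tau un u.
  move=> u u01 um z o; split; first by split.
  move=> v [v01 vm]; rewrite -subr_le0 key; last by rewrite um.
  by rewrite sumr_le0 // => i _; exact: term_le0.
set c := M - T k.+1.
have hc0 : 0 < c by rewrite /c subr_gt0; case/andP: condk.
have hca : c <= a by rewrite /c lerBlDl -HTk.
have a0 : a != 0 by rewrite gt_eqF.
set s := c / a.
have s0 : 0 < s by rewrite divr_gt0.
have s1 : s <= 1 by rewrite ler_pdivrMr // mul1r.
pose ustar i := if alpha < f i then 1 else if f i == alpha then s else 0.
have zs : zero ustar by move=> i h; rewrite /ustar (lt_gtF h) (lt_eqF h).
have os : one ustar by move=> i h; rewrite /ustar h.
have us01 : in01 ustar.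
  move=> i; rewrite /ustar; case: ifP => _; first by rewrite ler01 lexx.
  by case: ifP => _; rewrite ?lexx ?ler01 // (ltW s0) s1.
have sumstar : \sum_(i | f i == alpha) w i * ustar i = c.
  rewrite (eq_bigr (fun i => w i * s)); last first.
    by move=> i /eqP hi; rewrite /ustar hi ltxx eqxx.
  by rewrite -mulr_suml -/a mulrC divfK.
have usm : mass omega r ustar = M.
  by rewrite split_mass // sumstar /c addrC subrK.
have Sstar : inS omega r tau un ustar by apply: condS.
have char : forall u, inS omega r tau un u <->
   [/\ inX omega r M u, zero u, one u &
       c = \sum_(i | f i == alpha) w i * u i].
  move=> u; split; last by case=> [[u01 um] z o _]; apply: condS.
  case=> [[u01 um] umax]; have hge := umax ustar (conj us01 usm).
  have := key ustar u; rewrite usm um => /(_ erefl) hk.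
  have tz : forall i, w i * (u i - ustar i) * (f i - alpha) = 0.
    have hs : \sum_i - (w i * (u i - ustar i) * (f i - alpha)) = 0.
      apply/eqP; rewrite sumrN oppr_eq0 -hk eq_le subr_ge0 hge andbT subr_le0.
      by apply: Sstar.2; split.
    move=> i; apply/eqP; rewrite -oppr_eq0; apply/eqP.
    move: i isT; apply: (psumr_eq0P _ hs) => i _.
    by rewrite oppr_ge0; apply: term_le0.
  have eqs : forall i, f i != alpha -> u i = ustar i.
    move=> i hi; have := tz i; move/eqP; rewrite !mulf_eq0 (gt_eqF (wpos i)) /=.
    rewrite [f i - _ == 0]subr_eq0 (negbTE hi) orbF subr_eq0 => /eqP //.
  have zu : zero u by move=> i h; rewrite eqs ?(lt_eqF h) ?zs.
  have ou : one u by move=> i h; rewrite eqs ?(gt_eqF h) ?os.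
  split => //.
  by apply/eqP; rewrite /c /M -um split_mass // addrC addKr.
split.
- exact: kltK.
- exact: condk.
- move=> k' k'K; rewrite /cond => /andP[c1 c2].
  case: (ltngtP k' k) => // h; exfalso.
  + have := le_lt_trans (le_trans MTk (Tmono _ _ h)) c1; by rewrite ltxx.
  + case/andP: condk => c3 _.
    have := le_lt_trans (le_trans c2 (Tmono _ _ h)) c3; by rewrite ltxx.
- exact: char.
have allS_eq : (M = T k \/ exists! i, f i = alpha) ->
    forall u v, inS omega r tau un u -> inS omega r tau un v -> u = v.
  move=> H u v /char[[u01 um] zu ou su] /char[[v01 vm] zv ov sv].
  apply: funext => i.
  case: (ltgtP (f i) alpha) => h; [by rewrite zu ?zv | by rewrite ou ?ov |].
  case: H => [HMT | [i0 [fi0 i0u]]].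
  + have ca : c = a by rewrite /c HMT HTk addrC addKr.
    have one_on : forall x, in01 x -> c = \sum_(i | f i == alpha) w i * x i ->
        forall j, f j == alpha -> x j = 1.
      move=> x x01 sx j hj.
      have hs : \sum_(i | f i == alpha) w i * (1 - x i) = 0.
        under eq_bigr do rewrite mulrBr mulr1.
        by rewrite sumrB -/a -sx ca subrr.
      have := psumr_eq0P _ hs hj.
      move=> /(_ _)/eqP; rewrite mulf_eq0 (gt_eqF (wpos j)) /= subr_eq0 => /(_ _)/eqP.
      by move=> H; symmetry; apply: H => l _; rewrite mulr_ge0 ?(ltW (wpos l)) // subr_ge0; case/andP: (x01 l).
    by rewrite (one_on u) ?(one_on v) ?h.
  + have E1 : forall x, \sum_(i | f i == alpha) w i * x i = w i0 * x i0.
      move=> x; apply: big_pred1 => j /=.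
      by apply/eqP/eqP => [/i0u ->|->].
    rewrite -(i0u i h); apply: (@mulfI _ (w i0)); first by rewrite gt_eqF.
    by rewrite -!E1 -su -sv.
split.
- move=> [x [Sx xu]]; case: (eqVneq M (T k)) => hMT; first by left.
  right; have [i0 fi0] := @vs_attained _ _ f k kltK.
  exists i0; split => // j fj; apply/eqP; case: (eqVneq i0 j) => // hne; exfalso.
  have hca' : c < a.
    by rewrite /c ltrBlDl -HTk lt_neqAle hMT MTk.
  have s1' : s < 1 by rewrite ltr_pdivrMr ?mul1r // lt_neqAle.
  set d := Num.min ((1 - s) * w i0) (s * w j).
  have d0 : 0 < d by rewrite /d lt_min mulr_gt0 ?subr_gt0 ?wpos // mulr_gt0 ?wpos.
  have di0 : d / w i0 <= 1 - s by rewrite ler_pdivrMr ?wpos // /d ge_min lexx.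
  have dj : d / w j <= s by rewrite ler_pdivrMr ?wpos // /d ge_min lexx orbT.
  have dpi0 : 0 < d / w i0 by rewrite divr_gt0 ?wpos.
  have dpj : 0 < d / w j by rewrite divr_gt0 ?wpos.
  pose u' i := if i == i0 then s + d / w i0 else if i == j then s - d / w j else ustar i.
  have u'01 : in01 u'.
    move=> i; rewrite /u'; case: eqP => _; first by apply/andP; split; lra.
    case: eqP => _; first by apply/andP; split; lra.
    exact: us01.
  have zu' : zero u'.
    move=> i h; rewrite /u'; case: eqP => [ei|_]; first by move: h; rewrite ei fi0 ltxx.
    case: eqP => [ei|_]; first by move: h; rewrite ei fj ltxx.
    exact: zs.
  have ou' : one u'.
    move=> i h; rewrite /u'; case: eqP => [ei|_]; first by move: h; rewrite ei fi0 ltxx.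
    case: eqP => [ei|_]; first by move: h; rewrite ei fj ltxx.
    exact: os.
  have sum' : \sum_(i | f i == alpha) w i * u' i = c.
    rewrite (eq_bigr (fun i => w i * s + (if i == i0 then d else 0) - (if i == j then d else 0))); last first.
      move=> i hi; rewrite /u'; case: (eqVneq i i0) => [->|ne0].
        rewrite ?eqxx ?(negbTE hne) subr0 mulrDr; congr (_ + _); rewrite mulrCA divff ?mulr1 // gt_eqF ?wpos //.
      case: (eqVneq i j) => [->|nej].
        rewrite ?eqxx ?(negbTE hne) addr0 mulrBr; congr (_ - _); rewrite mulrCA divff ?mulr1 // gt_eqF ?wpos //.
      by rewrite /ustar (eqP hi) ltxx eqxx addr0 subr0.
    rewrite !big_split /= sumrN -mulr_suml -/a.
    rewrite (bigD1 i0) ?fi0 ?eqxx //= big1 ?addr0; last by move=> i /andP[_ /negbTE ->].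
    rewrite (bigD1 j) ?fj ?eqxx //= big1 ?addr0; last by move=> i /andP[_ /negbTE ->].
    by rewrite addrK mulrC divfK.
  have Su' : inS omega r tau un u'.
    by apply: condS => //; rewrite split_mass // sum' /c addrC subrK.
  have e := etrans (esym (xu _ Sstar)) (xu _ Su').
  have := congr1 (fun g => g i0) e; rewrite /ustar /u' /= fi0 ltxx !eqxx => es.
  lra.
- move=> H; exists ustar; split => // x Sx; exact: allS_eq H _ _ Sstar Sx.
Qed.
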